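(* Let $K$ be a perfect field, $k\subset K$ a subfield, and $V$ a two-sided vector space of rank $n$ over $K$. Then the non-commutative symmetric algebra $\mathcal{S}^{n.c.}_K(V)$ exists, i.e. $V^{i*}$ has rank $n$ for all $i\in\mathbb{Z}$.
   Context: A two-sided vector space is a $K\otimes_kK$-module; left (resp. right) multiplication by $K$ is the action of $K\otimes1$ (resp. $1\otimes K$); ${}_KV$, $V_K$ denote the restrictions of scalars; $V$ has rank $n$ if $\dim_K({}_KV)=\dim_K(V_K)=n$. The right dual $V^*$ is $\operatorname{Hom}_K(V_K,K)$ with $(a\cdot\psi\cdot b)(x)=a\psi(bx)$; the left dual ${}^*V$ is $\operatorname{Hom}_K({}_KV,K)$ with $(a\cdot\phi\cdot b)(x)=b\phi(xa)$. Iterated duals: $V^{0*}=V$, $V^{i*}=(V^{(i-1)*})^*$ for $i>0$, $V^{i*}={}^*(V^{(i+1)*})$ for $i<0$. By definition, the non-commutative symmetric algebra of a rank $n$ two-sided vector space $V$ exists if $V^{i*}$ has rank $n$ for every $i\in\mathbb{Z}$. *)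

(* Defs.v *)
From HB Require Import structures.
From mathcomp Require Import all_boot all_order all_algebra.
From Stdlib Require Import FunctionalExtensionality ProofIrrelevance.
Set Implicit Arguments. Unset Strict Implicit. Unset Printing Implicit Defensive.
Import GRing.Theory.
Local Open Scope ring_scope.

Definition perfect_field (K : fieldType) : Prop :=
  [pchar K] =i pred0 \/
  exists p : nat, p \in [pchar K] /\ forall x : K, exists y : K, y ^+ p = x.

(* A two-sided vector space over K relative to k, i.e. a (K (x)_k K)-module:
   an abelian group with commuting left and right K-actions that agree on k. *)
Record tsv (K : fieldType) (k : {pred K}) := TSV {
  car :> Type;
  vzero : car;
  vadd : car -> car -> car;
  vopp : car -> car;
  lact : K -> car -> car;
  ract : car -> K -> car;
  vaddA : forall x y z, vadd x (vadd y z) = vadd (vadd x y) z;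
  vaddC : forall x y, vadd x y = vadd y x;
  vadd0 : forall x, vadd vzero x = x;
  vaddN : forall x, vadd (vopp x) x = vzero;
  lact1 : forall x, lact 1 x = x;
  lactM : forall a b x, lact (a * b) x = lact a (lact b x);
  lactDr : forall a x y, lact a (vadd x y) = vadd (lact a x) (lact a y);
  lactDl : forall a b x, lact (a + b) x = vadd (lact a x) (lact b x);
  ract1 : forall x, ract x 1 = x;
  ractM : forall a b x, ract x (a * b) = ract (ract x a) b;
  ractDl : forall a x y, ract (vadd x y) a = vadd (ract x a) (ract y a);
  ractDr : forall a b x, ract x (a + b) = vadd (ract x a) (ract x b);
  lract : forall a b x, lact a (ract x b) = ract (lact a x) b;
  central : forall c x, c \in k -> lact c x = ract x c
}.

Arguments tsv : clear implicits.
Arguments vzero {K k} t.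
Arguments vadd {K k} [t].
Arguments vopp {K k} [t].
Arguments lact {K k} [t].
Arguments ract {K k} [t].

Section Duals.
Variables (K : fieldType) (k : {pred K}) (V : tsv K k).

Lemma sig_fun_eq (P : (V -> K) -> Prop) (f g : {h : V -> K | P h}) :
  (forall x, sval f x = sval g x) -> f = g.
Proof.
case: f g => [f pf] [g pg] /= H.
have E : f = g by apply: functional_extensionality.
subst g; f_equal; apply: proof_irrelevance.
Qed.

Definition rlin (f : V -> K) : Prop :=
  (forall x y, f (vadd x y) = f x + f y) /\ (forall x b, f (ract x b) = f x * b).

Definition rd_car := {f : V -> K | rlin f}.

Lemma rlin0 : rlin (fun _ => 0).
Proof. by split=> *; rewrite ?addr0 ?mul0r. Qed.
Lemma rlinD (f g : rd_car) : rlin (fun x => sval f x + sval g x).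
Proof.
case: f g => [f [f1 f2]] [g [g1 g2]] /=; split=> *.
  by rewrite f1 g1 addrACA.
by rewrite f2 g2 mulrDl.
Qed.
Lemma rlinN (f : rd_car) : rlin (fun x => - sval f x).
Proof.
case: f => [f [f1 f2]] /=; split=> *; first by rewrite f1 opprD.
by rewrite f2 mulNr.
Qed.
Lemma rlinL a (f : rd_car) : rlin (fun x => a * sval f x).
Proof.
case: f => [f [f1 f2]] /=; split=> *; first by rewrite f1 mulrDr.
by rewrite f2 mulrA.
Qed.
Lemma rlinR (f : rd_car) b : rlin (fun x => sval f (lact b x)).
Proof.
case: f => [f [f1 f2]] /=; split=> *; first by rewrite lactDr f1.
by rewrite lract f2.
Qed.

Definition rd_zero : rd_car := exist _ _ rlin0.
Definition rd_add (f g : rd_car) : rd_car := exist _ _ (rlinD f g).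
Definition rd_opp (f : rd_car) : rd_car := exist _ _ (rlinN f).
Definition rd_lact a (f : rd_car) : rd_car := exist _ _ (rlinL a f).
Definition rd_ract (f : rd_car) b : rd_car := exist _ _ (rlinR f b).

Definition rdual : tsv K k.
Proof.
refine (@TSV K k rd_car rd_zero rd_add rd_opp rd_lact rd_ract
  _ _ _ _ _ _ _ _ _ _ _ _ _ _); intros; apply: sig_fun_eq => w /=.
- by rewrite addrA.
- by rewrite addrC.
- by rewrite add0r.
- by rewrite addNr.
- by rewrite mul1r.
- by rewrite mulrA.
- by rewrite mulrDr.
- by rewrite mulrDl.
- by rewrite lact1.
- by rewrite lactM.
- by [].
- by case: x => f [f1 f2] /=; rewrite lactDl f1.
- by [].
- by case: x => f [f1 f2] /=; rewrite central // f2 mulrC.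
Defined.

Definition llin (f : V -> K) : Prop :=
  (forall x y, f (vadd x y) = f x + f y) /\ (forall a x, f (lact a x) = a * f x).

Definition ld_car := {f : V -> K | llin f}.

Lemma llin0 : llin (fun _ => 0).
Proof. by split=> *; rewrite ?addr0 ?mulr0. Qed.
Lemma llinD (f g : ld_car) : llin (fun x => sval f x + sval g x).
Proof.
case: f g => [f [f1 f2]] [g [g1 g2]] /=; split=> *.
  by rewrite f1 g1 addrACA.
by rewrite f2 g2 mulrDr.
Qed.
Lemma llinN (f : ld_car) : llin (fun x => - sval f x).
Proof.
case: f => [f [f1 f2]] /=; split=> *; first by rewrite f1 opprD.
by rewrite f2 mulrN.
Qed.
Lemma llinL a (f : ld_car) : llin (fun x => sval f (ract x a)).
Proof.
case: f => [f [f1 f2]] /=; split=> *; first by rewrite ractDl f1.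
by rewrite -lract f2.
Qed.
Lemma llinR (f : ld_car) b : llin (fun x => b * sval f x).
Proof.
case: f => [f [f1 f2]] /=; split=> *; first by rewrite f1 mulrDr.
by rewrite f2 mulrCA.
Qed.

Definition ld_zero : ld_car := exist _ _ llin0.
Definition ld_add (f g : ld_car) : ld_car := exist _ _ (llinD f g).
Definition ld_opp (f : ld_car) : ld_car := exist _ _ (llinN f).
Definition ld_lact a (f : ld_car) : ld_car := exist _ _ (llinL a f).
Definition ld_ract (f : ld_car) b : ld_car := exist _ _ (llinR f b).

Definition ldual : tsv K k.
Proof.
refine (@TSV K k ld_car ld_zero ld_add ld_opp ld_lact ld_ract
  _ _ _ _ _ _ _ _ _ _ _ _ _ _); intros; apply: sig_fun_eq => w /=.
- by rewrite addrA.
- by rewrite addrC.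
- by rewrite add0r.
- by rewrite addNr.
- by rewrite ract1.
- by rewrite ractM.
- by [].
- by case: x => f [f1 f2] /=; rewrite ractDr f1.
- by rewrite mul1r.
- by rewrite mulrCA mulrA.
- by rewrite mulrDr.
- by rewrite mulrDl.
- by [].
- by case: x => f [f1 f2] /=; rewrite -central // f2.
Defined.

End Duals.

(* Iterated duals: V^{0*} = V, V^{i*} = (V^{(i-1)*})^* for i > 0,
   V^{i*} = *(V^{(i+1)*}) for i < 0  (so V^{-(m+1)*} = *( ... *V) (m+1 times)). *)
Definition idual (K : fieldType) (k : {pred K}) (V : tsv K k) (i : int) : tsv K k :=
  match i with
  | Posz m => iter m (@rdual K k) V
  | Negz m => iter m.+1 (@ldual K k) V
  end.

Definition vsum (K : fieldType) (k : {pred K}) (V : tsv K k) n (F : 'I_n -> V) : V :=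
  \big[@vadd K k V / vzero V]_(i < n) F i.

Definition left_dim_eq (K : fieldType) (k : {pred K}) (V : tsv K k) (n : nat) : Prop :=
  exists e : 'I_n -> V,
    (forall c : 'I_n -> K, vsum (fun i => lact (c i) (e i)) = vzero V -> forall i, c i = 0)
    /\ (forall x : V, exists c : 'I_n -> K, x = vsum (fun i => lact (c i) (e i))).

Definition right_dim_eq (K : fieldType) (k : {pred K}) (V : tsv K k) (n : nat) : Prop :=
  exists e : 'I_n -> V,
    (forall c : 'I_n -> K, vsum (fun i => ract (e i) (c i)) = vzero V -> forall i, c i = 0)
    /\ (forall x : V, exists c : 'I_n -> K, x = vsum (fun i => ract (e i) (c i))).

Definition has_rank (K : fieldType) (k : {pred K}) (V : tsv K k) (n : nat) : Prop :=
  left_dim_eq V n /\ right_dim_eq V n.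

Definition nc_sym_exists (K : fieldType) (k : {pred K}) (V : tsv K k) (n : nat) : Prop :=
  forall i : int, has_rank (idual V i) n.

(* Main.v *)
Require Import Defs.
From HB Require Import structures.
From mathcomp Require Import all_boot all_order all_algebra zify.
From Stdlib Require Import Classical ClassicalEpsilon FunctionalExtensionality.
Set Implicit Arguments. Unset Strict Implicit. Unset Printing Implicit Defensive.
Import GRing.Theory.
Local Open Scope ring_scope.

Section Gen.
Variables (K : fieldType) (m : nat).
Implicit Types (U W : 'M[K]_m).

Definition hom (M : K -> 'M[K]_m) :=
  [/\ forall a b, M (a + b) = M a + M b, forall a b, M (a * b) = M a *m M b
    & M 1 = 1%:M].
Definition trM (M : K -> 'M[K]_m) := fun a => (M a)^T.
Definition stab (M : K -> 'M[K]_m) U := forall a, (U *m M a <= U)%MS.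
Definition perp U : 'M[K]_m := kermx U^T.

Lemma perpP p U (y : 'M[K]_(p, m)) : (y <= perp U)%MS = (y *m U^T == 0).
Proof. by rewrite sub_kermx. Qed.

Lemma perp_sym U W : (W <= perp U)%MS = (U <= perp W)%MS.
Proof.
rewrite !sub_kermx; apply/eqP/eqP => H.
  by rewrite -[U *m _]trmxK trmx_mul trmxK H trmx0.
by rewrite -[W *m _]trmxK trmx_mul trmxK H trmx0.
Qed.

Lemma rank_perp U : \rank (perp U) = (m - \rank U)%N.
Proof. by rewrite mxrank_ker mxrank_tr. Qed.

Lemma perpKs U : (U <= perp (perp U))%MS.
Proof. by rewrite -perp_sym submx_refl. Qed.

Lemma perpK U : (perp (perp U) :=: U)%MS.
Proof.
apply/eqmxP; rewrite perpKs andbT.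
have /mxrank_leqif_sup/geq_leqif <- := perpKs U.
rewrite !rank_perp subKn // rank_leq_col //.
Qed.

Lemma perpS U W : (U <= W)%MS -> (perp W <= perp U)%MS.
Proof. by move=> sUW; rewrite perp_sym (submx_trans sUW) // -perp_sym. Qed.

Lemma stabP M U : stab M U <->
  (forall u : 'rV_m, (u <= U)%MS -> forall a, (u *m M a <= U)%MS).
Proof.
split=> [H u /submxP[D ->] a|H a].
  by rewrite -mulmxA (submx_trans (submxMl _ _) (H a)).
by apply/row_subP => i; rewrite row_mul H // row_sub.
Qed.

Lemma stabE M U (u : 'rV[K]_m) a : stab M U -> (u <= U)%MS -> (u *m M a <= U)%MS.
Proof. by move=> sU uU; apply: (proj1 (stabP M U) sU u uU a). Qed.

Lemma stab_perp M U : hom M -> stab M U -> stab (trM M) (perp U).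
Proof.
move=> _ sU a; rewrite /trM perpP -mulmxA -trmx_mul.
have /submxP[D ->] := sU a.
by rewrite trmx_mul mulmxA (eqP (_ : _ *m U^T == 0)) ?mul0mx // -perpP submx_refl.
Qed.


Section Hom.
Variable M : K -> 'M[K]_m.
Hypothesis hM : hom M.

Lemma homD a b : M (a + b) = M a + M b. Proof. by case: hM. Qed.
Lemma homM a b : M (a * b) = M a *m M b. Proof. by case: hM. Qed.
Lemma hom1 : M 1 = 1%:M. Proof. by case: hM. Qed.
Lemma hom0 : M 0 = 0.
Proof. have H := homD 0 0; rewrite addr0 in H; apply: (addrI (M 0)); by rewrite addr0 -H. Qed.
Lemma homN a : M (- a) = - M a.
Proof. by apply/eqP; rewrite -addr_eq0 -homD addNr hom0. Qed.
Lemma homB a b : M (a - b) = M a - M b.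
Proof. by rewrite homD homN. Qed.
Lemma homC a b : M a *m M b = M b *m M a.
Proof. by rewrite -!homM mulrC. Qed.
Lemma homMC a b : M (a * b) = M b *m M a.
Proof. by rewrite mulrC homM. Qed.
End Hom.

Lemma homT M : hom M -> hom (trM M).
Proof.
move=> hM; split => [a b|a b|]; rewrite /trM.
- by rewrite homD // linearD.
- by rewrite homMC // trmx_mul.
- by rewrite hom1 // trmx1.
Qed.

Lemma trMK M : trM (trM M) = M.
Proof. by apply: functional_extensionality => a; rewrite /trM trmxK. Qed.

Definition good M (X : 'M[K]_m) :=
  [/\ forall a, X *m M a = M a *m X,
      forall W, stab M W -> (W *m X <= W)%MS
    & forall W, stab (trM M) W -> (W *m X^T <= W)%MS].

Lemma goodT M X : good M X -> good (trM M) X^T.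
Proof.
case=> H1 H2 H3; split => [a|W|W]; rewrite ?trMK ?trmxK //.
  by rewrite /trM -!trmx_mul H1.
  exact: H3.
exact: H2.
Qed.

Lemma goodMa M a : hom M -> good M (M a).
Proof.
move=> hM; split => [b|W sW|W sW]; first exact: homC.
  exact: sW.
exact: sW.
Qed.

Lemma good0 M : good M 0.
Proof. by split=> [a|W _|W _]; rewrite ?trmx0 ?mulmx0 ?mul0mx ?sub0mx. Qed.

Lemma goodD M X Y : good M X -> good M Y -> good M (X + Y).
Proof.
case=> X1 X2 X3 [Y1 Y2 Y3]; split => [a|W sW|W sW].
- by rewrite mulmxDl mulmxDr X1 Y1.
- by rewrite mulmxDr addmx_sub ?X2 ?Y2.
- by rewrite linearD /= mulmxDr addmx_sub ?X3 ?Y3.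
Qed.

Lemma goodZ M c X : good M X -> good M (c *: X).
Proof.
case=> X1 X2 X3; split => [a|W sW|W sW].
- by rewrite -scalemxAl -scalemxAr X1.
- by rewrite -scalemxAr scalemx_sub ?X2.
- by rewrite linearZ /= -scalemxAr scalemx_sub ?X3.
Qed.

Lemma goodN M X : good M X -> good M (- X).
Proof. by move=> gX; rewrite -scaleN1r; apply: goodZ. Qed.

Lemma goodM M X Y : good M X -> good M Y -> good M (X *m Y).
Proof.
case=> X1 X2 X3 [Y1 Y2 Y3]; split => [a|W sW|W sW].
- by rewrite -mulmxA Y1 !mulmxA X1.
- by rewrite mulmxA (submx_trans (submxMr _ (X2 _ sW))) ?Y2.
- by rewrite trmx_mul mulmxA (submx_trans (submxMr _ (Y3 _ sW))) ?X3.
Qed.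

Lemma good_sum M (I : finType) (F : I -> 'M[K]_m) :
  (forall i, good M (F i)) -> good M (\sum_i F i).
Proof.
by move=> H; elim/big_ind: _ => //; [apply: good0 | move=> ? ?; apply: goodD].
Qed.

Definition simple M U' U := forall W, stab M W -> (U' <= W)%MS -> (W <= U)%MS ->
  (W <= U')%MS \/ (U <= W)%MS.

Lemma simple_dual M U' U : hom M -> stab M U' -> stab M U ->
  simple M U' U -> simple (trM M) (perp U) (perp U').
Proof.
move=> hM sU' sU simp Z sZ s1 s2.
have sPZ : stab M (perp Z) by rewrite -[M]trMK; apply: stab_perp => //; apply: homT.
have h1 : (U' <= perp Z)%MS by rewrite -perp_sym.
have h2 : (perp Z <= U)%MS by rewrite -(perpK U) perpS.
case: (simp _ sPZ h1 h2) => [H|H]; [right|left].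
  by rewrite -(perpK Z) perpS.
by rewrite perp_sym.
Qed.

End Gen.
Section Greedy.
Variables (K : fieldType) (T : Type) (p q : nat) (g : T -> 'rV[K]_p) (A : 'M[K]_(q, p)).

Definition gm r (t : 'I_r -> T) : 'M[K]_(r, p) := \matrix_j g (t j).
Definition indep r (t : 'I_r -> T) := forall c : 'rV_r, (c *m gm t <= A)%MS -> c = 0.

Lemma gm_ext r (t : 'I_r -> T) x : indep t -> ~~ (g x <= A + gm t)%MS ->
  exists t' : 'I_r.+1 -> T, indep t' /\ (\rank (A + gm t) < \rank (A + gm t'))%N.
Proof.
move=> it Hx.
pose t' := fun i : 'I_r.+1 => if unlift ord_max i is Some j then t j else x.
have wL j : widen_ord (leqnSn r) j = lift ord_max j by apply: val_inj; rewrite /= /bump leqNgt ltn_ord.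
have tw j : t' (widen_ord (leqnSn r) j) = t j by rewrite /t' wL liftK.
have tm : t' ord_max = x by rewrite /t' unlift_none.
have decomp (c : 'rV_r.+1) : c *m gm t' =
    (\row_j c 0 (widen_ord (leqnSn r) j)) *m gm t + c 0 ord_max *: g x.
  rewrite !mulmx_sum_row big_ord_recr /=; congr (_ + _).
    by apply: eq_bigr => j _; rewrite !rowK mxE tw.
  by rewrite rowK tm.
have sGG : (gm t <= gm t')%MS.
  by apply/row_subP => j; rewrite rowK -tw -(rowK (fun i => g (t' i))) row_sub.
have sx : (g x <= gm t')%MS by rewrite -tm -(rowK (fun i => g (t' i))) row_sub.
exists t'; split.
  move=> c Hc; have Hg : c 0 ord_max = 0.
    apply/eqP; apply: contraNT Hx => nz.
    have -> : g x = (c 0 ord_max)^-1 *: (c *m gm t' -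
        (\row_j c 0 (widen_ord (leqnSn r) j)) *m gm t).
      by rewrite decomp addrC addKr scalerA mulVf ?scale1r.
    rewrite scalemx_sub // addmx_sub //.
      by rewrite (submx_trans Hc) ?addsmxSl.
    by rewrite eqmx_opp (submx_trans (submxMl _ _)) ?addsmxSr.
  have c0 := it (\row_j c 0 (widen_ord (leqnSn r) j)).
  have {c0} c0 : \row_j c 0 (widen_ord (leqnSn r) j) = 0.
    by apply: c0; rewrite -[X in (X <= _)%MS]addr0 -(scale0r (g x)) -Hg -decomp.
  apply/rowP => i; rewrite mxE.
  case: (unliftP ord_max i) => [j ->| ->]; last by rewrite Hg.
  by rewrite -wL; move/rowP: c0 => /(_ j); rewrite !mxE.
apply: rank_ltmx; rewrite ltmxE addsmxS ?submx_refl //=.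
apply: contra Hx => H; apply: submx_trans H.
by rewrite (submx_trans sx) ?addsmxSr.
Qed.

Lemma greedy : exists r (t : 'I_r -> T), indep t /\ (forall x, (g x <= A + gm t)%MS).
Proof.
suff H : forall N r (t : 'I_r -> T), indep t -> (p - \rank (A + gm t) <= N)%N ->
  exists r (t : 'I_r -> T), indep t /\ (forall x, (g x <= A + gm t)%MS).
  have t0 : 'I_0 -> T by move=> [? H0]; exfalso; by rewrite ltn0 in H0.
  apply: (H p 0 t0) => [c _|]; [exact: thinmx0 | exact: leq_subr].
elim=> [|N IH] r t it hN;
  (case: (classic (exists x, ~~ (g x <= A + gm t)%MS)) => [[x Hx]|H];
  last by exists r, t; split=> // x; apply/negPn/negP => Hn; apply: H; exists x).
  have [t' [_ lt]] := gm_ext it Hx.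
  have := rank_leq_col (A + gm t')%MS; move: hN lt; lia.
have [t' [it' lt]] := gm_ext it Hx.
apply: (IH _ t' it').
have := rank_leq_col (A + gm t')%MS; move: hN lt; lia.
Qed.
End Greedy.

Lemma zid (V : zmodType) (u w a b : V) : u - w - (a - b) = (u - a) - (w - b).
Proof. by rewrite (opprB w b) (opprB a b) addrACA [RHS]addrACA (addrC (- w)). Qed.
Lemma zid2 (V : zmodType) (u w a b : V) : u + w - (a + b) = (u - a) + (w - b).
Proof. by rewrite opprD addrACA. Qed.

Section Ldim.
Variables (K : fieldType) (m : nat) (M : K -> 'M[K]_m).
Hypothesis hM : hom M.

Definition lsum d (E : 'I_d -> 'rV[K]_m) (c : 'I_d -> K) := \sum_i E i *m M (c i).
Definition ldim (U' U : 'M[K]_m) d := exists E : 'I_d -> 'rV[K]_m,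
  [/\ forall i, (E i <= U)%MS,
      forall c, (lsum E c <= U')%MS -> forall i, c i = 0
    & forall u, (u <= U)%MS -> exists c, (u - lsum E c <= U')%MS].

Lemma lsumB d (E : 'I_d -> 'rV[K]_m) c1 c2 :
  lsum E c1 - lsum E c2 = lsum E (fun i => c1 i - c2 i).
Proof.
rewrite /lsum -sumrB; apply: eq_bigr => i _; by rewrite homB // mulmxBr.
Qed.
Lemma lsumD d (E : 'I_d -> 'rV[K]_m) c1 c2 :
  lsum E c1 + lsum E c2 = lsum E (fun i => c1 i + c2 i).
Proof.
rewrite /lsum -big_split; apply: eq_bigr => i _; by rewrite homD // mulmxDr.
Qed.
Lemma lsum0 d (E : 'I_d -> 'rV[K]_m) : lsum E (fun _ => 0) = 0.
Proof. by rewrite /lsum big1 // => i _; rewrite hom0 // mulmx0. Qed.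
Lemma lsumMr d (E : 'I_d -> 'rV[K]_m) c a :
  lsum E c *m M a = lsum E (fun i => c i * a).
Proof.
rewrite /lsum mulmx_suml; apply: eq_bigr => i _; by rewrite homM // mulmxA.
Qed.
Lemma lsum_sub d (E : 'I_d -> 'rV[K]_m) c U : stab M U -> (forall i, (E i <= U)%MS) ->
  (lsum E c <= U)%MS.
Proof. by move=> /stabP sU HE; apply: summx_sub => i _; apply: sU. Qed.

Section Coord.
Variables (U' U : 'M[K]_m) (d : nat) (E : 'I_d -> 'rV[K]_m).
Hypotheses (sU' : stab M U') (sU : stab M U) (sUU : (U' <= U)%MS).
Hypotheses (EU : forall i, (E i <= U)%MS)
  (Ei : forall c, (lsum E c <= U')%MS -> forall i, c i = 0)
  (Es : forall u, (u <= U)%MS -> exists c, (u - lsum E c <= U')%MS).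

Definition cf u : 'I_d -> K :=
  epsilon (inhabits (fun _ => 0)) (fun c => (u - lsum E c <= U')%MS).
Lemma cfP u : (u <= U)%MS -> (u - lsum E (cf u) <= U')%MS.
Proof using All. by move=> /Es Hu; apply: (epsilon_spec _ _ Hu). Qed.
Lemma cf_uniq u c : (u <= U)%MS -> (u - lsum E c <= U')%MS -> cf u = c.
Proof using All.
move=> Hu Hc; apply: functional_extensionality => i; apply/eqP; rewrite -subr_eq0.
apply/eqP; move: i; apply: Ei; rewrite -lsumB.
have -> : lsum E (cf u) - lsum E c = (u - lsum E c) - (u - lsum E (cf u)).
  by rewrite opprB [RHS]addrC addrA subrK.
by rewrite addmx_sub // ?cfP // eqmx_opp cfP.
Qed.
Definition coord u : 'rV[K]_d := \row_i cf u i.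
Lemma coordB u w : (u <= U)%MS -> (w <= U)%MS -> coord (u - w) = coord u - coord w.
Proof using All.
move=> Hu Hw; apply/rowP => i; rewrite !mxE.
rewrite (@cf_uniq (u - w) (fun i => cf u i - cf w i)) //.
  by rewrite addmx_sub // eqmx_opp.
by rewrite -lsumB zid addmx_sub ?cfP // eqmx_opp cfP.
Qed.
Lemma coordD u w : (u <= U)%MS -> (w <= U)%MS -> coord (u + w) = coord u + coord w.
Proof using All.
move=> Hu Hw; apply/rowP => i; rewrite !mxE.
rewrite (@cf_uniq (u + w) (fun i => cf u i + cf w i)) //.
  by rewrite addmx_sub.
by rewrite -lsumD zid2 addmx_sub ?cfP.
Qed.
Lemma coordM u a : (u <= U)%MS -> coord (u *m M a) = a *: coord u.
Proof using All.
move=> Hu; apply/rowP => i; rewrite !mxE.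
rewrite (@cf_uniq (u *m M a) (fun i => cf u i * a)); first by rewrite mulrC.
  by move/stabP: sU; apply.
rewrite -lsumMr -mulmxBl; by move/stabP: sU'; apply; apply: cfP.
Qed.
Lemma coord_lsum c : coord (lsum E c) = \row_i c i.
Proof using All.
apply/rowP => i; rewrite !mxE (@cf_uniq _ c) ?subrr ?sub0mx //.
exact: lsum_sub.
Qed.
Lemma coord_eq0 u : (u <= U)%MS -> coord u = 0 -> (u <= U')%MS.
Proof using All.
move=> Hu H0; have := cfP Hu.
have -> : cf u = fun _ => 0.
  by apply: functional_extensionality => i; move/rowP: H0 => /(_ i); rewrite !mxE.
by rewrite lsum0 subr0.
Qed.
Lemma coord0 u : (u <= U')%MS -> coord u = 0.
Proof using All.
move=> Hu; apply/rowP => i; rewrite !mxE (@cf_uniq _ (fun _ => 0)) //.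
  exact: submx_trans sUU.
by rewrite lsum0 subr0.
Qed.
Lemma coord_sumM r (F : 'I_r -> 'rV[K]_m) (c : 'I_r -> K) :
  (forall j, (F j <= U)%MS) ->
  coord (\sum_j F j *m M (c j)) = \sum_j c j *: coord (F j).
Proof using All.
move=> HF.
pose P (y1 : 'rV[K]_m) (y2 : 'rV[K]_d) := (y1 <= U)%MS /\ coord y1 = y2.
suff [] : P (\sum_j F j *m M (c j)) (\sum_j c j *: coord (F j)) by [].
apply: (big_rec2 P); first by split; [exact: sub0mx | apply: coord0; exact: sub0mx].
move=> j y1 y2 _ [H1 H2]; have HFj : (F j *m M (c j) <= U)%MS.
  by move/stabP: sU; apply.
by split; [rewrite addmx_sub | rewrite coordD // coordM // H2].
Qed.
End Coord.

Lemma ldim_split U' U W d : stab M U' -> stab M U -> stab M W ->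
  (U' <= W)%MS -> (W <= U)%MS -> ldim U' U d ->
  exists d1 d2, [/\ d = (d1 + d2)%N, ldim U' W d1 & ldim W U d2].
Proof.
move=> sU' sU sW sU'W sWU [E [EU Ei Es]].
have sUU : (U' <= U)%MS := submx_trans sU'W sWU.
have coB := coordB sU' sU sUU EU Ei Es.
have coD := coordD sU' sU sUU EU Ei Es.
have coL := coord_lsum sU' sU sUU EU Ei Es.
have coE0 := coord_eq0 sU' sU sUU EU Ei Es.
have co0 := coord0 sU' sU sUU EU Ei Es.
have coS := coord_sumM sU' sU sUU EU Ei Es.
pose T1 := {u : 'rV[K]_m | (u <= W)%MS}.
pose g1 := fun x : T1 => coord U' E (val x).
have [r1 [t1 [i1 s1]]] := greedy g1 (0 : 'M[K]_d).
pose G1 := gm g1 t1.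
pose T2 := {u : 'rV[K]_m | (u <= U)%MS}.
pose g2 := fun x : T2 => coord U' E (val x).
have [r2 [t2 [i2 s2]]] := greedy g2 G1.
pose G2 := gm g2 t2.
pose E1 := fun j => val (t1 j).
pose E2 := fun j => val (t2 j).
have E1W j : (E1 j <= W)%MS by exact: (valP (t1 j)).
have E1U j : (E1 j <= U)%MS by exact: submx_trans (E1W j) sWU.
have E2U j : (E2 j <= U)%MS by exact: (valP (t2 j)).
have coS1 c : coord U' E (lsum E1 c) = (\row_j c j) *m G1.
  by rewrite /lsum coS // mulmx_sum_row; apply: eq_bigr => j _; rewrite rowK mxE.
have coS2 c : coord U' E (lsum E2 c) = (\row_j c j) *m G2.
  by rewrite /lsum coS // mulmx_sum_row; apply: eq_bigr => j _; rewrite rowK mxE.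
have rowc0 r (c : 'I_r -> K) : \row_j c j = 0 -> forall j, c j = 0.
  by move=> H j; move/rowP: H => /(_ j); rewrite !mxE.
have rowK1 r (c : 'rV[K]_r) : \row_j c 0 j = c by apply/rowP => j; rewrite mxE.
have free r p (G : 'M[K]_(r, p)) : (forall c : 'rV_r, c *m G = 0 -> c = 0) -> \rank G = r.
  move=> H; apply/eqP; rewrite -/(row_free G) -kermx_eq0 -submx0.
  apply/row_subP => i; move: (row_sub i (kermx G)); rewrite sub_kermx => /eqP/H ->.
  exact: sub0mx.
have rk1 : \rank G1 = r1 by apply: free => c Hc; apply: i1; rewrite Hc sub0mx.
have rk2 : \rank G2 = r2 by apply: free => c Hc; apply: i2; rewrite Hc sub0mx.
have dis : (G1 :&: G2)%MS = 0.
  apply/eqP; rewrite -submx0; apply/row_subP => i.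
  have := row_sub i (G1 :&: G2)%MS; rewrite sub_capmx => /andP[h1 /submxP[c hc]].
  by move: h1; rewrite hc => /i2 ->; rewrite mul0mx sub0mx.
have full : (1%:M <= G1 + G2)%MS.
  apply/row_subP => i.
  have HL : (lsum E (fun j => row i 1%:M 0 j) <= U)%MS by apply: lsum_sub.
  have := s2 (exist (fun u : 'rV[K]_m => (u <= U)%MS) _ HL); rewrite /g2 /= coL.
  by rewrite rowK1.
have rkd : \rank (G1 + G2)%MS = d.
  apply/eqP; rewrite eqn_leq rank_leq_col /=.
  by rewrite -{1}(mxrank1 K d) mxrankS.
have lsE1U c : (lsum E1 c <= U)%MS by apply: lsum_sub.
have lsE1W c : (lsum E1 c <= W)%MS by apply: lsum_sub.
have lsE2U c : (lsum E2 c <= U)%MS by apply: lsum_sub.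
have span1 w : (w <= W)%MS -> exists c, (w - lsum E1 c <= U')%MS.
  move=> Hw; have HwU := submx_trans Hw sWU.
  have /sub_addsmxP[y hy] := s1 (exist (fun u : 'rV[K]_m => (u <= W)%MS) _ Hw).
  exists (fun j => y.2 0 j); apply: coE0; first by rewrite addmx_sub // eqmx_opp.
  by rewrite coB // coS1 rowK1 -[coord U' E w]/(g1 (exist (fun u : 'rV[K]_m => (u <= W)%MS) _ Hw)) hy mulmx0 add0r subrr.
exists r1, r2; split.
- by rewrite -rk1 -rk2 -mxrank_disjoint_sum.
- exists E1; split; [exact: E1W| move=> c Hc | exact: span1].
  apply: rowc0; apply: i1; by rewrite -coS1 co0 // sub0mx.
- exists E2; split; [exact: E2U| move=> c Hc | move=> u Hu].
    have [e He] := span1 _ Hc.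
    have H0 := co0 _ He.
    rewrite coB // !coS1 coS2 in H0.
    apply: rowc0; apply: i2; move/eqP: H0; rewrite subr_eq0 => /eqP ->.
    exact: submxMl.
  have /sub_addsmxP[y hy] := s2 (exist (fun u : 'rV[K]_m => (u <= U)%MS) _ Hu).
  have H1 : (u - lsum E2 (fun j => y.2 0 j) - lsum E1 (fun j => y.1 0 j) <= U')%MS.
    apply: coE0; first by rewrite !addmx_sub // eqmx_opp.
    rewrite !coB // ?addmx_sub // ?eqmx_opp // coS1 coS2 !rowK1.
    by rewrite -[coord U' E u]/(g2 (exist (fun u : 'rV[K]_m => (u <= U)%MS) _ Hu)) hy addrK subrr.
  exists (fun j => y.2 0 j).
  rewrite -[X in (X <= _)%MS](subrK (lsum E1 (fun j => y.1 0 j))).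
  by rewrite addmx_sub // (submx_trans H1).
Qed.

Lemma ldim_glue U' W U d1 d2 : stab M U' -> stab M W -> (U' <= W)%MS -> (W <= U)%MS ->
  ldim U' W d1 -> ldim W U d2 -> ldim U' U (d1 + d2).
Proof.
move=> sU' sW sU'W sWU [E1 [E1W i1 s1]] [E2 [E2U i2 s2]].
pose E i := match split i with inl j => E1 j | inr j => E2 j end.
have EL j : E (lshift d2 j) = E1 j.
  by rewrite /E (_ : split (lshift d2 j) = inl j) // -[lshift d2 j]/(unsplit (inl j)) unsplitK.
have ER j : E (rshift d1 j) = E2 j.
  by rewrite /E (_ : split (rshift d1 j) = inr j) // -[rshift d1 j]/(unsplit (inr j)) unsplitK.
have lsE c : lsum E c = lsum E1 (fun j => c (lshift d2 j)) + lsum E2 (fun j => c (rshift d1 j)).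
  by rewrite /lsum big_split_ord /=; congr (_ + _); apply: eq_bigr => j _; rewrite ?EL ?ER.
have lsE1W c : (lsum E1 c <= W)%MS by apply: lsum_sub.
exists E; split.
- move=> i; rewrite /E; case: (split i) => j; last exact: E2U.
  exact: submx_trans (E1W j) sWU.
- move=> c Hc.
  have h2 : forall j, c (rshift d1 j) = 0.
    apply: i2; rewrite -[X in (X <= _)%MS](addKr (lsum E1 (fun j => c (lshift d2 j)))).
    by rewrite addmx_sub // ?eqmx_opp // -lsE (submx_trans Hc).
  have h1 : forall j, c (lshift d2 j) = 0.
    apply: i1; move: Hc; rewrite lsE.
    have -> : lsum E2 (fun j => c (rshift d1 j)) = 0.
      by rewrite (_ : (fun j => _) = fun _ => 0) ?lsum0 //; apply: functional_extensionality.
    by rewrite addr0.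
  by move=> i; rewrite -(splitK i); case: (split i) => j /=.
- move=> u Hu; have [c2 H2] := s2 u Hu.
  have [c1 H1] := s1 _ H2.
  exists (fun i => match split i with inl j => c1 j | inr j => c2 j end).
  rewrite lsE.
  have -> : (fun j => match split (lshift d2 j) with inl j0 => c1 j0 | inr j0 => c2 j0 end) = c1.
    apply: functional_extensionality => j.
    by rewrite (_ : split (lshift d2 j) = inl j) // -[lshift d2 j]/(unsplit (inl j)) unsplitK.
  have -> : (fun j => match split (rshift d1 j) with inl j0 => c1 j0 | inr j0 => c2 j0 end) = c2.
    apply: functional_extensionality => j.
    by rewrite (_ : split (rshift d1 j) = inr j) // -[rshift d1 j]/(unsplit (inr j)) unsplitK.
  by rewrite opprD addrA addrAC.
Qed.
End Ldim.

Section Simple.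
Variables (K : fieldType) (m : nat).
Implicit Types (M : K -> 'M[K]_m) (U W : 'M[K]_m).

Lemma fwd M U' U (v z : 'rV[K]_m) X : hom M -> stab M U' -> stab M U ->
  (U' <= U)%MS -> simple M U' U -> (v <= U)%MS -> ~~ (v <= U')%MS ->
  (z <= perp U')%MS -> good M X -> (v *m X <= U')%MS -> (z *m X^T <= perp U)%MS.
Proof.
move=> hM sU' sU sUU simp vU vU' zU' [X1 X2 X3] vX.
pose S := (U :&: kermx (X *m cokermx U'))%MS.
have memS p (u : 'M[K]_(p, m)) : (u <= S)%MS = (u <= U)%MS && (u *m X <= U')%MS.
  by rewrite sub_capmx sub_kermx [(_ *m X <= _)%MS]submxE mulmxA.
have sS : stab M S.
  apply/stabP => u; rewrite memS => /andP[uU uX] a; rewrite memS.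
  rewrite (stabE a sU uU) /= -mulmxA -X1 mulmxA.
  exact: (stabE a sU' uX).
have U'S : (U' <= S)%MS by rewrite memS (submx_trans sUU) ?X2.
have SU : (S <= U)%MS by exact: capmxSl.
case: (simp S sS U'S SU) => [SU'|US].
  by move: vU'; rewrite (submx_trans _ SU') // memS vU vX.
move: US; rewrite memS submx_refl /= => /submxP[D hD].
rewrite perpP -mulmxA -trmx_mul hD trmx_mul mulmxA.
by move: zU'; rewrite perpP => /eqP->; rewrite mul0mx.
Qed.

Lemma span_simple M U' U (v : 'rV[K]_m) : hom M -> stab M U' -> stab M U ->
  (U' <= U)%MS -> simple M U' U -> (v <= U)%MS -> ~~ (v <= U')%MS ->
  exists r (a : 'I_r -> K), forall u, (u <= U)%MS ->
    exists k : 'I_r -> K, (u - v *m (\sum_j k j *: M (a j)) <= U')%MS.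
Proof.
move=> hM sU' sU sUU simp vU vU'.
have [r [t [_ st]]] := greedy (fun a => v *m M a) U'.
pose G := gm (fun a => v *m M a) t.
have sS : stab M (U' + G)%MS.
  move=> b; rewrite addsmxMr addsmx_sub; apply/andP; split.
    exact: submx_trans (sU' b) (addsmxSl _ _).
  apply/row_subP => j; rewrite row_mul rowK -mulmxA -homM //.
have US : (U' <= U' + G)%MS by exact: addsmxSl.
have SU : (U' + G <= U)%MS.
  rewrite addsmx_sub sUU /=; apply/row_subP => j; rewrite rowK.
  exact: (stabE _ sU vU).
have vS : (v <= U' + G)%MS by have := st 1; rewrite hom1 // mulmx1.
case: (simp _ sS US SU) => [SU'|USG].
  by move: vU'; rewrite (submx_trans vS SU').
exists r, t => u uU.
have /sub_addsmxP[y hy] := submx_trans uU USG.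
exists (fun j => y.2 0 j).
rewrite hy; have -> : y.2 *m G = \sum_j v *m (y.2 0 j *: M (t j)).
  by rewrite mulmx_sum_row; apply: eq_bigr => j _; rewrite rowK scalemxAr.
by rewrite mulmx_sumr addrK submxMl.
Qed.


Lemma ldim_simple M U' U d : hom M -> stab M U' -> stab M U -> (U' <= U)%MS ->
  ~~ (U <= U')%MS -> simple M U' U -> ldim M U' U d -> ldim (trM M) (perp U) (perp U') d.
Proof.
move=> hM sU' sU sUU nUU simp [E [EU Ei Es]].
have hMt := homT hM.
have sPU := stab_perp hM sU.
have sPU' := stab_perp hM sU'.
have sPP : (perp U <= perp U')%MS := perpS sUU.
have simpD := simple_dual hM sU' sU simp.
have /row_subPn[i vU'] := nUU.
set v := row i U in vU'; have vU : (v <= U)%MS := row_sub i U.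
have nPP : ~~ (perp U' <= perp U)%MS.
  apply: contra nUU => H; have h := perpS H.
  have h2 : (perp (perp U') <= U')%MS by rewrite perpK.
  exact: submx_trans (perpKs U) (submx_trans h h2).
have /row_subPn[i' zU] := nPP.
set z := row i' (perp U') in zU; have zU' : (z <= perp U')%MS := row_sub i' _.
have vPP : (v <= perp (perp U))%MS := submx_trans vU (perpKs U).
have [r [a sp]] := span_simple hM sU' sU sUU simp vU vU'.
have [r' [b sp']] := span_simple hMt sPU sPU' sPP simpD zU' zU.
have fw X : good M X -> (v *m X <= U')%MS -> (z *m X^T <= perp U)%MS.
  by move=> gX; apply: (fwd hM sU' sU sUU simp vU vU' zU' gX).
have bw X : good M X -> (z *m X^T <= perp U)%MS -> (v *m X <= U')%MS.
  move=> gX H; have := fwd hMt sPU sPU' sPP simpD zU' zU vPP (goodT gX) H.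
  by rewrite trmxK perpK.
pose Bx (k : 'I_r -> K) := \sum_j k j *: M (a j).
have gB k : good M (Bx k).
  by apply: good_sum => j; apply: goodZ; apply: goodMa.
pose kap j := epsilon (inhabits (fun _ : 'I_r => 0)) (fun k => (E j - v *m Bx k <= U')%MS).
have Hk j : (E j - v *m Bx (kap j) <= U')%MS by apply: (epsilon_spec _ _ (sp _ (EU j))).
pose X j := Bx (kap j).
pose F j := z *m (X j)^T.
have gX j : good M (X j) := gB _.
pose Y c := \sum_j X j *m M (c j).
have gY c : good M (Y c).
  by apply: good_sum => j; apply: goodM; [exact: gX | exact: goodMa].
have lsF c : lsum (trM M) F c = z *m (Y c)^T.
  rewrite /lsum /trM /Y linear_sum mulmx_sumr; apply: eq_bigr => j _.
  case: (gX j) => X1 _ _.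
  by rewrite /F -mulmxA -trmx_mul X1.
have lsE c : lsum M E c = v *m Y c + \sum_j (E j - v *m X j) *m M (c j).
  rewrite /lsum /Y mulmx_sumr -big_split /=; apply: eq_bigr => j _.
  by rewrite mulmxA -mulmxDl addrC subrK.
have Rsub c : ((\sum_j (E j - v *m X j) *m M (c j))%R <= U')%MS.
  by apply: summx_sub => j _; apply: stabE; [exact: sU' | exact: Hk].
exists F; split.
- move=> j; case: (gX j) => _ _ X3.
  exact: submx_trans (submxMr _ zU') (X3 _ sPU').
- move=> c Hc; apply: Ei; rewrite lsE addmx_sub //.
  by apply: bw; [exact: gY | rewrite -lsF].
- move=> y yU'; have [l Hl] := sp' y yU'.
  pose Z := \sum_j l j *: M (b j).
  have eZ : z *m (\sum_j l j *: trM M (b j)) = z *m Z^T.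
    rewrite /Z /trM mulmx_sumr [in RHS]linear_sum mulmx_sumr /=; apply: eq_bigr => j _.
    by rewrite (_ : (l j *: M (b j))^T = l j *: (M (b j))^T) //; apply/matrixP => x x0; rewrite !mxE.
  rewrite eZ in Hl.
  have gZ : good M Z by apply: good_sum => j; apply: goodZ; apply: goodMa.
  have uU : (v *m Z <= U)%MS.
    by case: gZ => _ Z2 _; exact: submx_trans (submxMr _ vU) (Z2 _ sU).
  have [c Hc] := Es _ uU.
  exists c.
  have H1 : (v *m (Z - Y c) <= U')%MS.
    rewrite mulmxBr lsE in Hc *.
    have -> : v *m Z - v *m Y c = (v *m Z - (v *m Y c + \sum_j (E j - v *m X j) *m M (c j)))
        + \sum_j (E j - v *m X j) *m M (c j) by rewrite opprD addrA subrK.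
    by rewrite addmx_sub.
  have H2 := fw _ (goodD gZ (goodN (gY c))) H1.
  rewrite lsF.
  have -> : y - z *m (Y c)^T = (y - z *m Z^T) + z *m (Z - Y c)^T.
    by rewrite linearB /= mulmxBr addrA subrK.
  by rewrite addmx_sub.
Qed.
End Simple.

Section Main.
Variables (K : fieldType) (m : nat).
Implicit Types (M : K -> 'M[K]_m) (U W : 'M[K]_m).

Lemma ldim_triv M U' U d : hom M -> (U <= U')%MS -> ldim M U' U d ->
  ldim (trM M) (perp U) (perp U') d.
Proof.
move=> hM sUU' [E [EU Ei Es]].
case: d E EU Ei Es => [|d] E EU Ei Es.
  exists (fun _ => 0); split => [[] //|c Hc [] //|u Hu].
  exists (fun _ => 0); rewrite /lsum big_ord0 subr0.
  exact: submx_trans Hu (perpS sUU').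
have H : (lsum M E (fun _ => 1) <= U')%MS.
  apply: summx_sub => i _; rewrite hom1 // mulmx1.
  exact: submx_trans (EU i) sUU'.
by have := Ei _ H ord0; move/eqP; rewrite oner_eq0.
Qed.

Lemma ldim_dual_n M : hom M -> forall n U' U d, (\rank U - \rank U')%N = n ->
  stab M U' -> stab M U -> (U' <= U)%MS -> ldim M U' U d ->
  ldim (trM M) (perp U) (perp U') d.
Proof.
move=> hM n; elim/ltn_ind: n => n IH U' U d hn sU' sU sUU hd.
have hMt := homT hM.
case: (boolP (U <= U')%MS) => nUU; first exact: ldim_triv.
case: (classic (exists W, [/\ stab M W, (U' <= W)%MS, (W <= U)%MS,
    ~~ (W <= U')%MS & ~~ (U <= W)%MS])) => [[W [sW s1 s2 n1 n2]]|nW].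
  have r1 : (\rank U' < \rank W)%N by apply: rank_ltmx; rewrite ltmxE s1.
  have r2 : (\rank W < \rank U)%N by apply: rank_ltmx; rewrite ltmxE s2.
  have [d1 [d2 [-> h1 h2]]] := ldim_split hM sU' sU sW s1 s2 hd.
  have H1 := IH _ (_ : (\rank W - \rank U' < n)%N) U' W d1 erefl sU' sW s1 h1.
  have H2 := IH _ (_ : (\rank U - \rank W < n)%N) W U d2 erefl sW sU s2 h2.
  rewrite addnC; apply: (ldim_glue hMt (stab_perp hM sU) (stab_perp hM sW)
    (perpS s2) (perpS s1)).
  - apply: H2; lia.
  - apply: H1; lia.
have simp : simple M U' U.
  move=> W sW s1 s2; case: (boolP (W <= U')%MS) => [|n1]; first by left.
  case: (boolP (U <= W)%MS) => [|n2]; first by right.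
  by exfalso; apply: nW; exists W.
exact: ldim_simple.
Qed.

Lemma ldim_full M n : hom M -> ldim M 0 1%:M n -> ldim (trM M) 0 1%:M n.
Proof.
move=> hM [E [EU Ei Es]].
have sT : stab M 1%:M by move=> a; exact: submx1.
have s0 : stab M 0 by move=> a; rewrite mul0mx sub0mx.
have [F [FU Fi Fs]] := ldim_dual_n hM erefl s0 sT (sub0mx _ _) (ex_intro _ E (And3 EU Ei Es)).
have p0 (y : 'rV[K]_m) : (y <= perp 0)%MS by rewrite perpP trmx0 mulmx0.
have p1 (y : 'rV[K]_m) : (y <= perp 1%:M)%MS = (y <= (0 : 'M[K]_m))%MS by rewrite perpP trmx1 mulmx1 submx0.
exists F; split => [i|c Hc|u Hu]; first exact: submx1.
  by apply: Fi; rewrite p1.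
by have [c Hc] := Fs u (p0 u); exists c; rewrite -p1.
Qed.
End Main.

Section VT.
Variables (K : fieldType) (k : {pred K}) (V : tsv K k).
Lemma vaddA' : associative (@vadd K k V). Proof. move=> x y z; exact: vaddA. Qed.
Lemma vaddC' : commutative (@vadd K k V). Proof. move=> x y; exact: vaddC. Qed.
Lemma vadd0' : left_id (vzero V) (@vadd K k V). Proof. move=> x; exact: vadd0. Qed.
HB.instance Definition _ := Monoid.isComLaw.Build V (vzero V) (@vadd K k V) vaddA' vaddC' vadd0'.

Lemma vaddx0 (x : V) : vadd x (vzero V) = x.
Proof. by rewrite vaddC vadd0. Qed.
Lemma vcancel (x y : V) : vadd x y = y -> x = vzero V.
Proof.
move=> H; have := congr1 (fun w => vadd w (vopp y)) H.
by rewrite -vaddA (vaddC y) vaddN vaddx0.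
Qed.
End VT.

Section Transport.
Variables (K : fieldType) (k : {pred K}) (V : tsv K k) (al be : K -> V -> V).
Hypotheses (alD : forall a x y, al a (vadd x y) = vadd (al a x) (al a y))
  (alDl : forall a b x, al (a + b) x = vadd (al a x) (al b x))
  (alM : forall a b x, al a (al b x) = al (a * b) x) (al1 : forall x, al 1 x = x)
  (beD : forall a x y, be a (vadd x y) = vadd (be a x) (be a y))
  (beDl : forall a b x, be (a + b) x = vadd (be a x) (be b x))
  (beM : forall a b x, be a (be b x) = be (a * b) x) (be1 : forall x, be 1 x = x)
  (albe : forall a b x, al a (be b x) = be b (al a x)).
Variables (n : nat) (ea eb : 'I_n -> V).
Hypotheses (ia : forall c, vsum (fun i => al (c i) (ea i)) = vzero V -> forall i, c i = 0)
  (sa : forall x, exists c, x = vsum (fun i => al (c i) (ea i)))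
  (ib : forall c, vsum (fun i => be (c i) (eb i)) = vzero V -> forall i, c i = 0)
  (sb : forall x, exists c, x = vsum (fun i => be (c i) (eb i))).

Lemma al0 x : al 0 x = vzero V.
Proof. by apply: (@vcancel _ _ _ _ (al 0 x)); rewrite -alDl addr0. Qed.
Lemma alx0 a : al a (vzero V) = vzero V.
Proof. by apply: (@vcancel _ _ _ _ (al a (vzero V))); rewrite -alD vadd0. Qed.
Lemma be0 x : be 0 x = vzero V.
Proof. by apply: (@vcancel _ _ _ _ (be 0 x)); rewrite -beDl addr0. Qed.
Lemma bex0 a : be a (vzero V) = vzero V.
Proof. by apply: (@vcancel _ _ _ _ (be a (vzero V))); rewrite -beD vadd0. Qed.

Lemma al_sum a r (F : 'I_r -> V) : al a (vsum F) = vsum (fun i => al a (F i)).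
Proof. by rewrite /vsum (big_morph (al a) (alD a) (alx0 a)). Qed.
Lemma be_sum a r (F : 'I_r -> V) : be a (vsum F) = vsum (fun i => be a (F i)).
Proof. by rewrite /vsum (big_morph (be a) (beD a) (bex0 a)). Qed.

Lemma vsum0 r : vsum (fun _ : 'I_r => vzero V) = vzero V.
Proof. by rewrite /vsum big1. Qed.

Lemma uniq_a c c' : vsum (fun i => al (c i) (ea i)) = vsum (fun i => al (c' i) (ea i)) ->
  forall i, c i = c' i.
Proof.
move=> H i; apply/eqP; rewrite -subr_eq0; apply/eqP; move: i; apply: ia.
apply: (@vcancel _ _ _ _ (vsum (fun i => al (c' i) (ea i)))).
transitivity (vsum (fun i => al (c i) (ea i))); last exact: H.
by rewrite /vsum -big_split /=; apply: eq_bigr => i _; rewrite -alDl subrK.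
Qed.

Definition acf x : 'I_n -> K :=
  epsilon (inhabits (fun _ => 0)) (fun c => x = vsum (fun i => al (c i) (ea i))).
Lemma acfP x : x = vsum (fun i => al (acf x i) (ea i)).
Proof. exact: (epsilon_spec _ _ (sa x)). Qed.
Definition ac x : 'rV[K]_n := \row_i acf x i.
Lemma ac_uniq x c : x = vsum (fun i => al (c i) (ea i)) -> ac x = \row_i c i.
Proof.
move=> H; apply/rowP => i; rewrite !mxE; apply: uniq_a.
by rewrite -H -acfP.
Qed.
Lemma acP x : x = vsum (fun i => al (ac x 0 i) (ea i)).
Proof. by rewrite {1}(acfP x); congr vsum; apply: functional_extensionality => i; rewrite mxE. Qed.
Lemma acD x y : ac (vadd x y) = ac x + ac y.
Proof.
rewrite (@ac_uniq _ (fun i => ac x 0 i + ac y 0 i)).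
  by apply/rowP => i; rewrite !mxE.
rewrite {1}(acP x) {1}(acP y) /vsum -big_split /=; apply: eq_bigr => i _.
by rewrite alDl.
Qed.
Lemma ac0 : ac (vzero V) = 0.
Proof.
rewrite (@ac_uniq _ (fun _ => 0)); first by apply/rowP => i; rewrite !mxE.
by rewrite -(vsum0 n); congr vsum; apply: functional_extensionality => i; rewrite al0.
Qed.
Lemma ac_inj x y : ac x = ac y -> x = y.
Proof. by move=> H; rewrite (acP x) (acP y) H. Qed.
Lemma ac_al a x : ac (al a x) = a *: ac x.
Proof.
rewrite (@ac_uniq _ (fun i => a * ac x 0 i)); first by apply/rowP => i; rewrite !mxE.
by rewrite {1}(acP x) al_sum; congr vsum; apply: functional_extensionality => i; rewrite alM.
Qed.
Lemma ac_sum r (F : 'I_r -> V) : ac (vsum F) = \sum_i ac (F i).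
Proof. by rewrite /vsum (big_morph ac acD ac0). Qed.
Lemma ac_ea j : ac (ea j) = \row_i (i == j)%:R.
Proof.
apply: ac_uniq; rewrite /vsum (bigD1 j) //= eqxx al1 big1 ?vaddx0 // => i /negbTE ->.
exact: al0.
Qed.

Definition Mb b : 'M[K]_n := \matrix_(i, j) ac (be b (ea i)) 0 j.
Lemma ac_be b x : ac (be b x) = ac x *m Mb b.
Proof.
rewrite {1}(acP x) be_sum ac_sum mulmx_sum_row; apply: eq_bigr => i _.
rewrite -albe ac_al; congr (_ *: _); apply/rowP => j; by rewrite !mxE.
Qed.
Lemma hom_Mb : hom Mb.
Proof.
split => [a b|a b|].
- apply/row_matrixP => i; rewrite linearD /= !rowK.
  apply/rowP => j; rewrite !mxE beDl.
  by move/rowP: (acD (be a (ea i)) (be b (ea i))) => /(_ j); rewrite !mxE.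
- apply/row_matrixP => i; rewrite row_mul !rowK.
  by rewrite -ac_be beM mulrC.
- apply/row_matrixP => i; rewrite rowK be1 ac_ea; apply/rowP => j.
  by rewrite !mxE eq_sym.
Qed.


Definition psi (z : 'rV[K]_n) (x : V) : K := (ac x *m z^T) 0 0.
Definition Da (f : V -> K) :=
  (forall x y, f (vadd x y) = f x + f y) /\ (forall a x, f (al a x) = a * f x).

Lemma Da_psi z : Da (psi z).
Proof.
split=> [x y|a x]; rewrite /psi.
  by rewrite acD mulmxDl mxE.
by rewrite ac_al -scalemxAl mxE.
Qed.
Lemma psi_be z b x : psi z (be b x) = psi (z *m (Mb b)^T) x.
Proof. by rewrite /psi ac_be trmx_mul trmxK mulmxA. Qed.
Lemma psi_sum r (Z : 'I_r -> 'rV[K]_n) x : \sum_i psi (Z i) x = psi (\sum_i Z i) x.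
Proof. by rewrite /psi linear_sum mulmx_sumr summxE. Qed.
Lemma psi_scale c z x : c * psi z x = psi (c *: z) x.
Proof.
rewrite /psi (_ : (c *: z)^T = c *: z^T); last by apply/matrixP => i j; rewrite !mxE.
by rewrite -scalemxAr !mxE.
Qed.
Lemma psi_ea z j : psi z (ea j) = z 0 j.
Proof.
rewrite /psi ac_ea (_ : \row_i _ = row j 1%:M); last first.
  by apply/rowP => i; rewrite !mxE eq_sym.
by rewrite -row_mul mul1mx !mxE.
Qed.
Lemma psi_inj z : (forall x, psi z x = 0) -> z = 0.
Proof. by move=> H; apply/rowP => j; rewrite -psi_ea H mxE. Qed.
Lemma Da_psiE f : Da f -> forall x, f x = psi (\row_j f (ea j)) x.
Proof.
move=> [fD fa] x.
have f0 : f (vzero V) = 0.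
  by apply: (addrI (f (vzero V))); rewrite -fD vadd0 addr0.
rewrite {1}(acP x) /vsum (big_morph f fD f0) /psi mxE.
by apply: eq_bigr => i _; rewrite fa !mxE.
Qed.

Lemma row_sum_delta (z : 'rV[K]_n) : \sum_i z 0 i *: row i (1%:M : 'M[K]_n) = z.
Proof. by rewrite -mulmx_sum_row mulmx1. Qed.

Lemma transport_out : exists G : 'I_n -> (V -> K), [/\ forall i, Da (G i),
  forall c, (forall x, \sum_i c i * G i x = 0) -> forall i, c i = 0
  & forall f, Da f -> exists c, forall x, f x = \sum_i c i * G i x].
Proof.
exists (fun i => psi (row i 1%:M)); split => [i|c Hc|f Hf].
- exact: Da_psi.
- have : \row_i c i = 0.
    apply: psi_inj => x; transitivity (\sum_i c i * psi (row i 1%:M) x); last exact: Hc x.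
    rewrite -[\row_i c i]row_sum_delta -psi_sum.
    by apply: eq_bigr => i _; rewrite -psi_scale mxE.
  by move/rowP => H i; move: (H i); rewrite !mxE.
- exists (fun i => f (ea i)) => x; rewrite (Da_psiE Hf) -{1}[\row_j f (ea j)]row_sum_delta.
  by rewrite -psi_sum; apply: eq_bigr => i _; rewrite -psi_scale mxE.
Qed.

Lemma transport_in : exists F : 'I_n -> (V -> K), [/\ forall i, Da (F i),
  forall c, (forall x, \sum_i F i (be (c i) x) = 0) -> forall i, c i = 0
  & forall f, Da f -> exists c, forall x, f x = \sum_i F i (be (c i) x)].
Proof.
have hM := hom_Mb.
pose E i := ac (eb i).
have lsE c : lsum Mb E c = ac (vsum (fun i => be (c i) (eb i))).
  by rewrite ac_sum; apply: eq_bigr => i _; rewrite ac_be.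
have hdim : ldim Mb 0 1%:M n.
  exists E; split => [i|c Hc|u _]; first exact: submx1.
    apply: ib; apply: ac_inj; rewrite ac0 -lsE; apply/eqP; by rewrite -submx0.
  have [c Hc] := sb (vsum (fun i => al (u 0 i) (ea i))).
  exists c; rewrite lsE -Hc (@ac_uniq _ (fun i => u 0 i)) //.
  by rewrite (_ : \row_i u 0 i = u) ?subrr ?sub0mx //; apply/rowP => j; rewrite mxE.
have [R [_ Ri Rs]] := ldim_full hM hdim.
have lsR c x : \sum_i psi (R i) (be (c i) x) = psi (lsum (trM Mb) R c) x.
  by rewrite /lsum -psi_sum; apply: eq_bigr => i _; rewrite psi_be.
exists (fun i => psi (R i)); split => [i|c Hc|f Hf].
- exact: Da_psi.
- apply: Ri; have -> : lsum (trM Mb) R c = 0 by apply: psi_inj => x; rewrite -lsR Hc.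
  exact: sub0mx.
- have [c Hc] := Rs (\row_j f (ea j)) (submx1 _).
  exists c => x; rewrite lsR (Da_psiE Hf); congr psi.
  by move: Hc; rewrite submx0 subr_eq0 => /eqP.
Qed.
End Transport.

Section Duals2.
Variables (K : fieldType) (k : {pred K}).

Lemma rd_eval (V : tsv K k) r (F : 'I_r -> rdual V) x :
  sval (vsum F : rd_car V) x = \sum_i sval (F i : rd_car V) x.
Proof.
rewrite /vsum (big_morph (fun f : rdual V => sval (f : rd_car V) x)
  (id1 := 0) (op1 := +%R)) //.
Qed.

Lemma ld_eval (V : tsv K k) r (F : 'I_r -> ldual V) x :
  sval (vsum F : ld_car V) x = \sum_i sval (F i : ld_car V) x.
Proof.
rewrite /vsum (big_morph (fun f : ldual V => sval (f : ld_car V) x)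
  (id1 := 0) (op1 := +%R)) //.
Qed.

Lemma rdual_rank (V : tsv K k) n : has_rank V n -> has_rank (rdual V) n.
Proof.
move=> [[el [il sl]] [er [ir sr]]].
pose al a (x : V) := ract x a.
pose be a (x : V) := lact a x.
have alD a x y : al a (vadd x y) = vadd (al a x) (al a y) by exact: ractDl.
have alDl a b x : al (a + b) x = vadd (al a x) (al b x) by exact: ractDr.
have alM a b x : al a (al b x) = al (a * b) x by rewrite /al -ractM mulrC.
have al1 x : al 1 x = x by exact: ract1.
have beD a x y : be a (vadd x y) = vadd (be a x) (be a y) by exact: lactDr.
have beDl a b x : be (a + b) x = vadd (be a x) (be b x) by exact: lactDl.
have beM a b x : be a (be b x) = be (a * b) x by rewrite /be lactM.
have be1 x : be 1 x = x by exact: lact1.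
have albe a b x : al a (be b x) = be b (al a x) by rewrite /al /be lract.
have DaE f : Da al f <-> rlin f.
  split=> [[f1 f2]|[f1 f2]]; split=> //.
    by move=> x b; rewrite mulrC; exact: f2.
  by move=> a x; rewrite /al f2 mulrC.
split.
- have [G [Gd Gi Gs]] := transport_out alD alDl alM al1 ir sr.
  pose e i : rdual V := exist _ (G i) (proj1 (DaE _) (Gd i)) : rd_car V.
  exists e; split.
    move=> c Hc; apply: Gi => x.
    by have := congr1 (fun f : rdual V => sval (f : rd_car V) x) Hc; rewrite rd_eval.
  move=> psi; have [c Hc] := Gs _ (proj2 (DaE _) (svalP psi)).
  exists c; apply: sig_fun_eq => x; by rewrite rd_eval Hc.
- have [F [Fd Fi Fs]] := transport_in alD alDl alM al1 beD beDl beM be1 albe ir sr il sl.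
  pose e i : rdual V := exist _ (F i) (proj1 (DaE _) (Fd i)) : rd_car V.
  exists e; split.
    move=> c Hc; apply: Fi => x.
    by have := congr1 (fun f : rdual V => sval (f : rd_car V) x) Hc; rewrite rd_eval.
  move=> psi; have [c Hc] := Fs _ (proj2 (DaE _) (svalP psi)).
  exists c; apply: sig_fun_eq => x; by rewrite rd_eval Hc.
Qed.

Lemma ldual_rank (V : tsv K k) n : has_rank V n -> has_rank (ldual V) n.
Proof.
move=> [[el [il sl]] [er [ir sr]]].
pose al a (x : V) := lact a x.
pose be a (x : V) := ract x a.
have alD a x y : al a (vadd x y) = vadd (al a x) (al a y) by exact: lactDr.
have alDl a b x : al (a + b) x = vadd (al a x) (al b x) by exact: lactDl.
have alM a b x : al a (al b x) = al (a * b) x by rewrite /al lactM.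
have al1 x : al 1 x = x by exact: lact1.
have beD a x y : be a (vadd x y) = vadd (be a x) (be a y) by exact: ractDl.
have beDl a b x : be (a + b) x = vadd (be a x) (be b x) by exact: ractDr.
have beM a b x : be a (be b x) = be (a * b) x by rewrite /be -ractM mulrC.
have be1 x : be 1 x = x by exact: ract1.
have albe a b x : al a (be b x) = be b (al a x) by rewrite /al /be lract.
split.
- have [F [Fd Fi Fs]] := transport_in alD alDl alM al1 beD beDl beM be1 albe il sl ir sr.
  pose e i : ldual V := exist _ (F i) (Fd i) : ld_car V.
  exists e; split.
    move=> c Hc; apply: Fi => x.
    by have := congr1 (fun f : ldual V => sval (f : ld_car V) x) Hc; rewrite ld_eval.
  move=> psi; have [c Hc] := Fs _ (svalP psi).
  exists c; apply: sig_fun_eq => x; by rewrite ld_eval Hc.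
- have [G [Gd Gi Gs]] := transport_out alD alDl alM al1 il sl.
  pose e i : ldual V := exist _ (G i) (Gd i) : ld_car V.
  exists e; split.
    move=> c Hc; apply: Gi => x.
    by have := congr1 (fun f : ldual V => sval (f : ld_car V) x) Hc; rewrite ld_eval.
  move=> psi; have [c Hc] := Gs _ (svalP psi).
  exists c; apply: sig_fun_eq => x; by rewrite ld_eval Hc.
Qed.
End Duals2.

Theorem corollary4p4 (K : fieldType) (k : divringClosed K) (V : tsv K k) (n : nat) :
  perfect_field K -> has_rank V n -> nc_sym_exists V n.
Proof.
move=> _ hV [m|m] /=.
  by elim: m => //= m IH; apply: rdual_rank.
elim: m => /= [|m IH]; first exact: ldual_rank.
exact: ldual_rank.
Qed.
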